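(* There exists a locally finite quasi-transitive tree that has no periodic proper edge-coloring.
   Context: Locally finite: all degrees finite; quasi-transitive: finitely many automorphism orbits on vertices. A proper edge-coloring assigns distinct colors to edges sharing a vertex; it is periodic if the subgroup of automorphisms mapping every edge to an edge of the same color has finitely many orbits on the vertex set. *)

(* Defs.v *)
From Stdlib Require Import List Relations.
Import ListNotations.
Set Implicit Arguments.

Section Graphs.
Variable V : Type.
Variable adj : V -> V -> Prop.

Definition simple_graph : Prop :=
  (forall x y, adj x y -> adj y x) /\ (forall x, ~ adj x x).

Definition locally_finite : Prop :=
  forall v, exists l : list V, forall w, adj v w -> In w l.

Fixpoint walk (l : list V) : Prop :=
  match l with
  | x :: ((y :: _) as t) => adj x y /\ walk t
  | _ => True
  end.

Definition has_cycle : Prop :=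
  exists (x : V) (l : list V),
    2 <= length l /\ NoDup (x :: l) /\ walk (x :: l) /\ adj (last l x) x.

Definition connected : Prop :=
  forall x y, clos_refl_trans V adj x y.

Definition is_tree : Prop :=
  simple_graph /\ inhabited V /\ connected /\ ~ has_cycle.

Definition automorphism (f : V -> V) : Prop :=
  (exists g : V -> V, (forall x, g (f x) = x) /\ (forall x, f (g x) = x)) /\
  (forall x y, adj x y <-> adj (f x) (f y)).

Definition finitely_many_orbits (G : (V -> V) -> Prop) : Prop :=
  exists s : list V, forall v, exists u, In u s /\ exists f, G f /\ f u = v.

Definition quasi_transitive : Prop := finitely_many_orbits automorphism.

Definition edge_coloring (C : Type) (c : V -> V -> C) : Prop :=
  forall x y, adj x y -> c x y = c y x.

Definition proper_edge_coloring (C : Type) (c : V -> V -> C) : Prop :=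
  edge_coloring c /\
  forall x y z, adj x y -> adj x z -> y <> z -> c x y <> c x z.

Definition color_preserving (C : Type) (c : V -> V -> C) (f : V -> V) : Prop :=
  automorphism f /\ forall x y, adj x y -> c (f x) (f y) = c x y.

Definition periodic (C : Type) (c : V -> V -> C) : Prop :=
  finitely_many_orbits (color_preserving c).

End Graphs.

(* Main.v *)
Require Import Defs.
From Stdlib Require Import List Relations ZArith Lia Bool Classical ProofIrrelevance FunctionalExtensionality IndefiniteDescription.
Import ListNotations.

Lemma NoDup_map_inj {A B} (f : A -> B) (l : list A) :
  NoDup l -> (forall x y, In x l -> In y l -> f x = f y -> x = y) -> NoDup (map f l).
Proof.
  induction 1 as [|a l Ha Hl IH]; intros Hi; simpl; constructor.
  - intros Hin. apply in_map_iff in Hin as [y [Hy Hy']].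
    assert (y = a) by (apply Hi; simpl; auto). subst. auto.
  - apply IH. intros; apply Hi; simpl; auto.
Qed.

Lemma NoDup_prod {A B} (l : list A) (l' : list B) :
  NoDup l -> NoDup l' -> NoDup (list_prod l l').
Proof.
  intros H1 H2. induction H1 as [|a l Ha Hl IH]; simpl; [constructor|].
  apply NoDup_app; auto.
  - apply NoDup_map_inj; auto. intros x y _ _ E. injection E; auto.
  - intros [x y] Hx Hy. apply in_map_iff in Hx as [z [Ez _]]. injection Ez; intros; subst.
    apply in_prod_iff in Hy as [Hy _]. auto.
Qed.

Lemma NoDup_of_splits {A} (l : list A) :
  (forall l1 a l2, l = l1 ++ a :: l2 -> ~ In a (l1 ++ l2)) -> NoDup l.
Proof.
  induction l as [|x t IH]; intros H; constructor.
  - apply (H [] x t); reflexivity.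
  - apply IH. intros l1 a l2 E Hin. subst t.
    apply (H (x :: l1) a l2); [reflexivity| simpl; auto].
Qed.

Lemma last_In {A} (l : list A) d : l <> [] -> In (last l d) l.
Proof.
  induction l as [|a t IH]; intros H; [congruence|].
  destruct t as [|b t]; simpl; auto.
  right. apply IH. discriminate.
Qed.

Definition adjF {X} (pi : X -> X) (x y : X) : Prop := y = pi x \/ x = pi y.

Fixpoint nb {X} (l : list X) : Prop :=
  match l with
  | a :: ((b :: c :: _) as t) => a <> c /\ nb t
  | _ => True
  end.

Section Forest.
Variable X : Type.
Variable pi : X -> X.
Variable rho : X -> Z.
Hypothesis Hrho : forall x, rho (pi x) = (rho x + 1)%Z.

Lemma down_persist : forall l a b d,
  walk (adjF pi) (a :: b :: l) -> nb (a :: b :: l) -> rho b = (rho a - 1)%Z ->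
  rho (last (b :: l) d) = (rho a - Z.of_nat (S (length l)))%Z.
Proof.
  induction l as [|c l IH]; intros a b d Hw Hn Hr.
  - simpl. lia.
  - destruct Hw as [Hab [Hbc Hw]]. destruct Hn as [Hac Hn].
    destruct Hab as [Hab|Hab].
    + subst b. rewrite Hrho in Hr. lia.
    + destruct Hbc as [Hbc|Hbc].
      * subst. congruence.
      * assert (Hc : rho c = (rho b - 1)%Z) by (subst b; rewrite Hrho; lia).
        specialize (IH b c d (conj (or_intror Hbc) Hw) Hn Hc).
        change (last (b :: c :: l) d) with (last (c :: l) d).
        rewrite IH. simpl length. lia.
Qed.

Lemma up_end : forall t a y z,
  walk (adjF pi) (a :: t ++ [y; z]) -> nb (a :: t ++ [y; z]) -> rho z = (rho y + 1)%Z ->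
  rho z = (rho a + Z.of_nat (length t + 2))%Z.
Proof.
  induction t as [|b t IH]; intros a y z Hw Hn Hr.
  - pose proof Hw as Hw0. simpl in Hw. destruct Hw as [Hay Hw].
    destruct Hay as [Hay|Hay].
    + subst y. rewrite Hrho in Hr. simpl. lia.
    + exfalso. assert (Hy : rho y = (rho a - 1)%Z) by (subst a; rewrite Hrho; lia).
      pose proof (down_persist [z] a y z Hw0 Hn Hy) as H. simpl in H. lia.
  - pose proof Hw as Hw0. simpl in Hw. destruct Hw as [Hab Hw].
    assert (Hn' : nb (b :: t ++ [y; z])).
    { simpl in Hn. destruct t; simpl in *; tauto. }
    specialize (IH b y z Hw Hn' Hr).
    destruct Hab as [Hab|Hab].
    + subst b. rewrite Hrho in IH. simpl length. lia.
    + exfalso. assert (Hb : rho b = (rho a - 1)%Z) by (subst a; rewrite Hrho; lia).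
      pose proof (down_persist (t ++ [y; z]) a b z) as H.
      specialize (H Hw0 Hn Hb).
      replace (last (b :: t ++ [y; z]) z) with z in H.
      2:{ replace (b :: t ++ [y; z]) with ((b :: t ++ [y]) ++ [z]) by (simpl; rewrite <- app_assoc; reflexivity).
          rewrite last_last. reflexivity. }
      rewrite length_app in H. simpl in H. lia.
Qed.

Lemma walk_snoc : forall (u : list X) d a,
  u <> [] -> walk (adjF pi) u -> adjF pi (last u d) a -> walk (adjF pi) (u ++ [a]).
Proof.
  induction u as [|b u IH]; intros d a Hne Hw Ha; [congruence|].
  destruct u as [|c u].
  - simpl in *. auto.
  - simpl in Hw |- *. destruct Hw as [Hbc Hw]. split; auto.
    apply (IH d); [discriminate|auto|auto].
Qed.

Lemma nb_snoc2 : forall (w : list X) x y,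
  NoDup w -> ~ In x w -> (forall d, w <> [] -> last w d <> y) -> nb (w ++ [x; y]).
Proof.
  induction w as [|a w IH]; intros x y Hd Hx Hl; [simpl; auto|].
  destruct w as [|b w].
  - simpl. split; [|auto]. intros E. apply (Hl a); [discriminate|]. simpl. auto.
  - inversion Hd as [|? ? Ha Hd']; subst.
    assert (IH' : nb ((b :: w) ++ [x; y])).
    { apply IH; auto. intros Hin; apply Hx; simpl; auto.
      intros d _. apply (Hl d). discriminate. }
    destruct w as [|c w].
    + simpl in *. split; [|exact IH']. intros E; apply Hx; auto.
    + simpl in *. split; [|exact IH']. intros E; apply Ha; subst; auto.
Qed.

Lemma forest_no_cycle : ~ has_cycle (adjF pi).
Proof.
  intros [x [l [Hlen [Hnd [Hw Hlast]]]]].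
  destruct l as [|l1 [|l2 r]]; simpl in Hlen; try lia.
  set (Y := x :: (l1 :: l2 :: r) ++ [x; l1]).
  assert (HwY : walk (adjF pi) Y).
  { unfold Y. replace (x :: (l1 :: l2 :: r) ++ [x; l1]) with (((x :: l1 :: l2 :: r) ++ [x]) ++ [l1])
      by (simpl; rewrite <- app_assoc; reflexivity).
    apply (walk_snoc _ x).
    - destruct r; discriminate.
    - apply (walk_snoc _ x); [discriminate|auto|].
      replace (last (x :: l1 :: l2 :: r) x) with (last (l1 :: l2 :: r) x) by reflexivity. exact Hlast.
    - rewrite last_last. simpl in Hw. tauto. }
  inversion Hnd as [|? ? Hx Hnd']; subst.
  inversion Hnd' as [|? ? Hl1 Hnd'']; subst.
  assert (HnY : nb Y).
  { unfold Y. change (x <> l2 /\ nb ((l1 :: l2 :: r) ++ [x; l1])). split.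
    - intros E; subst; apply Hx; simpl; auto.
    - apply nb_snoc2; auto.
      intros d _ E. apply Hl1. rewrite <- E.
      change (last (l1 :: l2 :: r) d) with (last (l2 :: r) d).
      apply last_In. discriminate. }
  simpl in Hw. destruct Hw as [Hxl1 _].
  destruct Hxl1 as [E|E].
  -
    assert (Hr : rho l1 = (rho x + 1)%Z) by (subst l1; apply Hrho).
    pose proof (up_end (l1 :: l2 :: r) x x l1 HwY HnY Hr) as H. simpl length in H. lia.
  - assert (Hr : rho l1 = (rho x - 1)%Z) by (subst x; rewrite Hrho; lia).
    pose proof (down_persist (l2 :: r ++ [x; l1]) x l1 l1 HwY HnY Hr) as H.
    replace (last (l1 :: l2 :: r ++ [x; l1]) l1) with l1 in H.
    2:{ replace (l1 :: l2 :: r ++ [x; l1]) with ((l1 :: l2 :: r ++ [x]) ++ [l1])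
          by (simpl; rewrite <- app_assoc; reflexivity).
        rewrite last_last. reflexivity. }
    simpl length in H. rewrite length_app in H. simpl in H. lia.
Qed.
End Forest.
(* ---------- the horocyclic (lamplighter) binary tree M ---------- *)
Definition good (x : Z * (Z -> bool)) : Prop :=
  exists lo, forall j, snd x j = true -> (lo <= j < fst x)%Z.
Definition M := {x : Z * (Z -> bool) | good x}.
Definition lev (m : M) : Z := fst (proj1_sig m).
Definition dig (m : M) : Z -> bool := snd (proj1_sig m).

Lemma dig_lt m j : dig m j = true -> (j < lev m)%Z.
Proof. destruct m as [[k D] [lo H]]; unfold dig, lev; simpl in *. intros E; apply H in E; lia. Qed.

Lemma dig_lo m : exists lo, forall j, dig m j = true -> (lo <= j)%Z.
Proof. destruct m as [[k D] [lo H]]; unfold dig; simpl in *. exists lo. intros j E; apply H in E; lia. Qed.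

Lemma M_ext (m m' : M) : lev m = lev m' -> (forall j, dig m j = dig m' j) -> m = m'.
Proof.
  destruct m as [[k D] Hm], m' as [[k' D'] Hm']; unfold lev, dig; simpl. intros -> HD.
  assert (D = D') by (apply functional_extensionality; auto). subst.
  f_equal. apply proof_irrelevance.
Qed.

Definition praw (x : Z * (Z -> bool)) : Z * (Z -> bool) :=
  (fst x - 1, fun j => snd x j && (j <? fst x - 1))%Z.
Lemma good_praw x : good x -> good (praw x).
Proof. intros [lo H]; exists lo; intros j; simpl; rewrite andb_true_iff, Z.ltb_lt; intros [H1 H2];
  specialize (H j H1); lia. Qed.
Definition pM (m : M) : M := exist _ (praw (proj1_sig m)) (good_praw _ (proj2_sig m)).

Definition craw (b : bool) (x : Z * (Z -> bool)) : Z * (Z -> bool) :=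
  (fst x + 1, fun j => snd x j || (b && (j =? fst x)))%Z.
Lemma good_craw b x : good x -> good (craw b x).
Proof. intros [lo H]; exists (Z.min lo (fst x)); intros j; simpl; rewrite orb_true_iff, andb_true_iff, Z.eqb_eq.
  intros [H1|[_ H1]]; [specialize (H j H1)|]; lia. Qed.
Definition cM (m : M) (b : bool) : M := exist _ (craw b (proj1_sig m)) (good_craw _ _ (proj2_sig m)).

Definition sraw (d : Z) (x : Z * (Z -> bool)) : Z * (Z -> bool) :=
  (fst x + d, fun j => snd x (j - d))%Z.
Lemma good_sraw d x : good x -> good (sraw d x).
Proof. intros [lo H]; exists (lo + d)%Z; intros j; simpl; intros H1; specialize (H _ H1); lia. Qed.
Definition sigM (d : Z) (m : M) : M := exist _ (sraw d (proj1_sig m)) (good_sraw _ _ (proj2_sig m)).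

Definition xraw (y : M) (x : Z * (Z -> bool)) : Z * (Z -> bool) :=
  (fst x, fun j => xorb (snd x j) (dig y j && (j <? fst x)))%Z.
Lemma good_xraw y x : good x -> good (xraw y x).
Proof. intros [lo H]. destruct (dig_lo y) as [lo' H'].
  exists (Z.min lo lo'); intros j; simpl.
  destruct (snd x j) eqn:E1, (dig y j) eqn:E2, (Z.ltb_spec j (fst x)); simpl; intros HH; try discriminate;
  try (specialize (H _ E1)); try (specialize (H' _ E2)); lia. Qed.
Definition chiM (y : M) (m : M) : M := exist _ (xraw y (proj1_sig m)) (good_xraw _ _ (proj2_sig m)).

Lemma lev_pM m : lev (pM m) = (lev m - 1)%Z. Proof. reflexivity. Qed.
Lemma dig_pM m j : dig (pM m) j = dig m j && (j <? lev m - 1)%Z. Proof. reflexivity. Qed.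
Lemma lev_cM m b : lev (cM m b) = (lev m + 1)%Z. Proof. reflexivity. Qed.
Lemma dig_cM m b j : dig (cM m b) j = dig m j || (b && (j =? lev m)%Z). Proof. reflexivity. Qed.

Lemma pM_cM m b : pM (cM m b) = m.
Proof.
  apply M_ext; rewrite ?lev_pM, ?lev_cM; [lia|]. intros j.
  rewrite dig_pM, dig_cM, lev_cM. destruct (dig m j) eqn:E.
  - apply dig_lt in E. simpl. destruct (Z.ltb_spec j (lev m + 1 - 1)); [reflexivity|lia].
  - simpl. destruct b, (Z.eqb_spec j (lev m)), (Z.ltb_spec j (lev m + 1 - 1)); simpl; try reflexivity; lia.
Qed.

Lemma cM_pM y : y = cM (pM y) (dig y (lev y - 1)%Z).
Proof.
  apply M_ext; rewrite ?lev_cM, ?lev_pM; [lia|]. intros j.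
  rewrite dig_cM, dig_pM, lev_pM.
  destruct (Z.ltb_spec j (lev y - 1)), (Z.eqb_spec j (lev y - 1)); try lia.
  - rewrite andb_true_r, andb_false_r, orb_false_r. reflexivity.
  - subst j. rewrite !andb_false_r, andb_true_r. reflexivity.
  - rewrite !andb_false_r. simpl.
    destruct (dig y j) eqn:E; [apply dig_lt in E; lia|reflexivity].
Qed.

Lemma pM_inv y m : pM y = m -> y = cM m true \/ y = cM m false.
Proof. intros <-. pose proof (cM_pM y) as E. destruct (dig y (lev y - 1)%Z); [left|right]; exact E. Qed.

Lemma cM_neq m : cM m true <> cM m false.
Proof.
  intros E. assert (H : dig (cM m true) (lev m) = dig (cM m false) (lev m)) by (rewrite E; reflexivity).
  rewrite !dig_cM, Z.eqb_refl in H. simpl in H. rewrite orb_true_r, orb_false_r in H.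
  symmetry in H. apply dig_lt in H. lia.
Qed.

Lemma cM_inj m b b' : cM m b = cM m b' -> b = b'.
Proof. destruct b, b'; auto; intros E; [|symmetry in E]; apply cM_neq in E; contradiction. Qed.

Definition Mauto (f : M -> M) : Prop :=
  (exists g, (forall x, g (f x) = x) /\ (forall x, f (g x) = x)) /\ forall x, f (pM x) = pM (f x).

Lemma Mauto_comp f g : Mauto f -> Mauto g -> Mauto (fun x => f (g x)).
Proof.
  intros [[f' [H1 H2]] Hf] [[g' [H3 H4]] Hg]. split.
  - exists (fun x => g' (f' x)). split; intros x; [rewrite H1; auto | rewrite H4; auto].
  - intros x. rewrite Hg, Hf. reflexivity.
Qed.

Lemma sigM_auto d : Mauto (sigM d).
Proof.
  split.
  - exists (sigM (- d)). split; intros x; apply M_ext; unfold lev, dig; simpl; try lia;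
      intros j; f_equal; lia.
  - intros x. apply M_ext; unfold lev, dig; simpl; [lia|]. intros j.
    destruct (Z.ltb_spec (j - d) (fst (proj1_sig x) - 1)), (Z.ltb_spec j (fst (proj1_sig x) + d - 1));
      try lia; reflexivity.
Qed.

Lemma chiM_auto y : Mauto (chiM y).
Proof.
  split.
  - exists (chiM y). split; intros x; apply M_ext; unfold lev, dig; simpl; try lia;
      intros j; rewrite xorb_assoc, xorb_nilpotent, xorb_false_r; reflexivity.
  - intros x. apply M_ext; unfold lev, dig; simpl; [lia|]. intros j.
    destruct (Z.ltb_spec j (fst (proj1_sig x) - 1)), (Z.ltb_spec j (fst (proj1_sig x))); try lia;
      rewrite ?andb_true_r, ?andb_false_r; try reflexivity.
Qed.

Definition base0 : M := exist _ (0%Z, fun _ => false) (ex_intro _ 0%Z (fun j (H : false = true) => match diff_false_true H with end)).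

Lemma M_trans m : exists f, Mauto f /\ f base0 = m.
Proof.
  exists (fun x => chiM m (sigM (lev m) x)). split.
  - apply Mauto_comp; [apply chiM_auto|apply sigM_auto].
  - apply M_ext; [reflexivity|]. intros j.
    change (dig (chiM m (sigM (lev m) base0)) j) with (xorb false (dig m j && (j <? 0 + lev m)%Z)).
    destruct (dig m j) eqn:E; simpl.
    + apply dig_lt in E. destruct (Z.ltb_spec j (lev m)); [reflexivity|lia].
    + reflexivity.
Qed.

Fixpoint iterp (n : nat) (m : M) : M := match n with O => m | S n => pM (iterp n m) end.

Lemma iterp_spec n m : lev (iterp n m) = (lev m - Z.of_nat n)%Z /\
  forall j, dig (iterp n m) j = dig m j && (j <? lev m - Z.of_nat n)%Z.
Proof.
  induction n as [|n [IH1 IH2]]; simpl.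
  - split; [lia|]. intros j. destruct (dig m j) eqn:E; [apply dig_lt in E|]; simpl; [|reflexivity].
    destruct (Z.ltb_spec j (lev m - 0)); [reflexivity|lia].
  - split; [rewrite lev_pM; lia|]. intros j. rewrite dig_pM, IH2, IH1, <- andb_assoc. f_equal.
    destruct (Z.ltb_spec j (lev m - Z.of_nat n)), (Z.ltb_spec j (lev m - Z.of_nat n - 1)),
      (Z.ltb_spec j (lev m - Z.pos (Pos.of_succ_nat n))); try lia; reflexivity.
Qed.

Lemma M_common m m' : exists n n', iterp n m = iterp n' m'.
Proof.
  destruct (dig_lo m) as [lo H], (dig_lo m') as [lo' H'].
  set (L := Z.min (Z.min lo lo') (Z.min (lev m) (lev m'))).
  exists (Z.to_nat (lev m - L)), (Z.to_nat (lev m' - L)).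
  destruct (iterp_spec (Z.to_nat (lev m - L)) m) as [A1 A2].
  destruct (iterp_spec (Z.to_nat (lev m' - L)) m') as [B1 B2].
  apply M_ext; [rewrite A1, B1; lia|]. intros j. rewrite A2, B2.
  destruct (dig m j) eqn:E1, (dig m' j) eqn:E2; simpl; try reflexivity;
  try (apply H in E1); try (apply H' in E2);
  repeat match goal with |- context [(?a <? ?b)%Z] => destruct (Z.ltb_spec a b) end; try reflexivity; lia.
Qed.
Section GenAuto.
Variable X : Type.
Variable adj : X -> X -> Prop.

Lemma auto_inv f : automorphism adj f ->
  exists g, automorphism adj g /\ (forall x, g (f x) = x) /\ (forall x, f (g x) = x).
Proof.
  intros [[g [H1 H2]] Ha]. exists g. split; [|auto]. split.
  - exists f. auto.
  - intros x y. rewrite (Ha (g x) (g y)), !H2. tauto.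
Qed.

Lemma auto_adj f x y : automorphism adj f -> adj x y -> adj (f x) (f y).
Proof. intros [_ Ha] H. apply (proj1 (Ha x y)). exact H. Qed.

Lemma fwd_to_iff (P : X -> Prop) :
  (forall f x, automorphism adj f -> P x -> P (f x)) ->
  forall f x, automorphism adj f -> (P x <-> P (f x)).
Proof.
  intros H f x Hf. split; [apply H; auto|].
  destruct (auto_inv f Hf) as [g [Hg [H1 H2]]]. intros Hp. rewrite <- (H1 x). apply H; auto.
Qed.

Definition leafG x := forall y z, adj x y -> adj x z -> y = z.
Definition AG x := exists y z, y <> z /\ adj x y /\ adj x z /\ leafG y /\ leafG z.
Definition NLG x := exists y, adj x y /\ leafG y.
Definition BG x := ~ leafG x /\ NLG x /\ ~ AG x.
Definition MG x := ~ leafG x /\ ~ NLG x.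
Definition PR x y := MG x /\ MG y /\ exists a b, adj x a /\ AG a /\ adj a b /\ BG b /\ adj b y.

Lemma leaf_fwd f x : automorphism adj f -> leafG x -> leafG (f x).
Proof.
  intros Hf Hl. destruct (auto_inv f Hf) as [g [Hg [H1 H2]]]. destruct Hf as [_ Ha].
  intros y z Hy Hz. rewrite <- (H2 y), <- (H2 z) in *. f_equal. apply Hl; apply Ha; auto.
Qed.
Lemma leaf_iff f x : automorphism adj f -> (leafG x <-> leafG (f x)).
Proof. apply fwd_to_iff. intros; apply leaf_fwd; auto. Qed.

Lemma A_fwd f x : automorphism adj f -> AG x -> AG (f x).
Proof.
  intros Hf [y [z [Hyz [Hy [Hz [Ly Lz]]]]]]. pose proof Hf as Hf'.
  destruct (auto_inv f Hf) as [g [Hg [H1 H2]]]. destruct Hf as [_ Ha].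
  exists (f y), (f z). repeat split.
  - intros E. apply Hyz. rewrite <- (H1 y), <- (H1 z). congruence.
  - apply auto_adj; auto.
  - apply auto_adj; auto.
  - apply (leaf_iff f y Hf'); auto.
  - apply (leaf_iff f z Hf'); auto.
Qed.
Lemma A_iff f x : automorphism adj f -> (AG x <-> AG (f x)).
Proof. apply fwd_to_iff. intros; apply A_fwd; auto. Qed.

Lemma NL_fwd f x : automorphism adj f -> NLG x -> NLG (f x).
Proof.
  intros Hf [y [Hy Ly]]. exists (f y). split; [apply auto_adj; auto|apply (leaf_iff f y Hf); auto].
Qed.
Lemma NL_iff f x : automorphism adj f -> (NLG x <-> NLG (f x)).
Proof. apply fwd_to_iff. intros; apply NL_fwd; auto. Qed.

Lemma B_iff f x : automorphism adj f -> (BG x <-> BG (f x)).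
Proof. intros Hf. unfold BG. rewrite (leaf_iff f x Hf), (NL_iff f x Hf), (A_iff f x Hf). tauto. Qed.
Lemma M_iff f x : automorphism adj f -> (MG x <-> MG (f x)).
Proof. intros Hf. unfold MG. rewrite (leaf_iff f x Hf), (NL_iff f x Hf). tauto. Qed.

Lemma PR_fwd f x y : automorphism adj f -> PR x y -> PR (f x) (f y).
Proof.
  intros Hf [Mx [My [a [b [H1 [H2 [H3 [H4 H5]]]]]]]].
  split; [apply M_iff; auto|]. split; [apply M_iff; auto|].
  exists (f a), (f b).
  split; [apply auto_adj; auto|]. split; [apply (A_iff f a Hf); auto|].
  split; [apply auto_adj; auto|]. split; [apply (B_iff f b Hf); auto|].
  apply auto_adj; auto.
Qed.

Lemma cp_free (C : Type) (c : X -> X -> C) f x :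
  connected adj -> proper_edge_coloring adj c -> color_preserving adj c f -> f x = x ->
  forall y, f y = y.
Proof.
  intros Hcon [_ Hp] [[_ Ha] Hc] Hx y.
  specialize (Hcon x y). apply clos_rt_rt1n in Hcon.
  induction Hcon as [x|x z y Hxz Hzy IH]; auto.
  apply IH. apply NNPP. intros Hne.
  assert (H1 : adj x (f z)) by (rewrite <- Hx at 1; apply (proj1 (Ha _ _)); auto).
  apply (Hp x z (f z) Hxz H1 (fun E => Hne (eq_sym E))).
  rewrite <- (Hc x z Hxz), Hx. reflexivity.
Qed.

Lemma cp_inv (C : Type) (c : X -> X -> C) f : color_preserving adj c f ->
  exists g, color_preserving adj c g /\ (forall x, g (f x) = x) /\ (forall x, f (g x) = x).
Proof.
  intros [Hf Hc]. destruct (auto_inv f Hf) as [g [Hg [H1 H2]]]. exists g. split; auto.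
  split; auto. intros x y Hxy.
  assert (Hg' : adj (g x) (g y)) by (apply auto_adj; auto).
  rewrite <- (Hc _ _ Hg'), !H2. reflexivity.
Qed.

Lemma cp_comp (C : Type) (c : X -> X -> C) f g : color_preserving adj c f -> color_preserving adj c g ->
  color_preserving adj c (fun x => f (g x)).
Proof.
  intros [[[f' [F1 F2]] Fa] Fc] [[[g' [G1 G2]] Ga] Gc]. split; [split|].
  - exists (fun x => g' (f' x)). split; intros x; [rewrite F1; auto|rewrite G2; auto].
  - intros x y. rewrite Ga, Fa. tauto.
  - intros x y Hxy. rewrite Fc; [apply Gc; auto| apply (proj1 (Ga _ _)); auto].
Qed.

Lemma cp_id (C : Type) (c : X -> X -> C) : color_preserving adj c (fun x => x).
Proof. split; [split|]; [exists (fun x => x)|..]; auto; tauto. Qed.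

End GenAuto.
Arguments leafG {X} adj x.
Arguments AG {X} adj x.
Arguments NLG {X} adj x.
Arguments BG {X} adj x.
Arguments MG {X} adj x.
Arguments PR {X} adj x y.
(* ---------- the tree V: M with gadgets on each edge ---------- *)
Inductive tag := TM | TA | TB | T1 | T2 | T3.
Definition V : Type := (M * tag)%type.

Definition piV (x : V) : V :=
  let (m, t) := x in
  match t with
  | TM => (m, TA) | TA => (m, TB) | TB => (pM m, TM)
  | T1 => (m, TA) | T2 => (m, TA) | T3 => (m, TB)
  end.

Definition rhoV (x : V) : Z :=
  let (m, t) := x in
  match t with
  | TM => (- 3 * lev m)%Z | TA => (- 3 * lev m + 1)%Z | TB => (- 3 * lev m + 2)%Z
  | T1 => (- 3 * lev m)%Z | T2 => (- 3 * lev m)%Z | T3 => (- 3 * lev m + 1)%Z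
  end.

Lemma rhoV_pi x : rhoV (piV x) = (rhoV x + 1)%Z.
Proof. destruct x as [m []]; unfold piV, rhoV; rewrite ?lev_pM; lia. Qed.

Definition adjV : V -> V -> Prop := adjF piV.

Lemma nbrs m t w : adjV (m, t) w ->
  match t with
  | TM => w = (m, TA) \/ exists y, w = (y, TB) /\ pM y = m
  | TA => w = (m, TB) \/ w = (m, TM) \/ w = (m, T1) \/ w = (m, T2)
  | TB => w = (pM m, TM) \/ w = (m, TA) \/ w = (m, T3)
  | T1 | T2 => w = (m, TA)
  | T3 => w = (m, TB)
  end.
Proof.
  destruct w as [m' t']. unfold adjV, adjF. intros [H|H]; destruct t, t'; simpl in H;
  try discriminate; injection H; intros; subst; eauto 7.
Qed.

Lemma adj_MA m : adjV (m, TM) (m, TA). Proof. left; reflexivity. Qed.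
Lemma adj_AM m : adjV (m, TA) (m, TM). Proof. right; reflexivity. Qed.
Lemma adj_AB m : adjV (m, TA) (m, TB). Proof. left; reflexivity. Qed.
Lemma adj_BA m : adjV (m, TB) (m, TA). Proof. right; reflexivity. Qed.
Lemma adj_BP m : adjV (m, TB) (pM m, TM). Proof. left; reflexivity. Qed.
Lemma adj_A1 m : adjV (m, TA) (m, T1). Proof. right; reflexivity. Qed.
Lemma adj_A2 m : adjV (m, TA) (m, T2). Proof. right; reflexivity. Qed.
Lemma adj_B3 m : adjV (m, TB) (m, T3). Proof. right; reflexivity. Qed.
Lemma adj_MC m b : adjV (m, TM) (cM m b, TB). Proof. right; simpl; rewrite pM_cM; reflexivity. Qed.

Lemma leafV m t : leafG adjV (m, t) <-> (t = T1 \/ t = T2 \/ t = T3).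
Proof.
  split.
  - intros H. destruct t; auto; exfalso.
    + specialize (H _ _ (adj_MA m) (adj_MC m true)). discriminate.
    + specialize (H _ _ (adj_AM m) (adj_AB m)). discriminate.
    + specialize (H _ _ (adj_BA m) (adj_BP m)). discriminate.
  - intros Ht y z Hy Hz. apply nbrs in Hy. apply nbrs in Hz.
    destruct Ht as [->|[->| ->]]; congruence.
Qed.

Ltac tagcase :=
  repeat match goal with
  | H : _ \/ _ |- _ => destruct H
  | H : exists _, _ |- _ => destruct H
  | H : _ /\ _ |- _ => destruct H
  end; subst.

Lemma AV m t : AG adjV (m, t) <-> t = TA.
Proof.
  split.
  - intros [y [z [Hyz [Hy [Hz [Ly Lz]]]]]]. destruct t; auto; exfalso;
    apply nbrs in Hy; apply nbrs in Hz; tagcase;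
    try (apply leafV in Ly; tagcase; discriminate);
    try (apply leafV in Lz; tagcase; discriminate); congruence.
  - intros ->. exists (m, T1), (m, T2). repeat split.
    + discriminate.
    + apply adj_A1.
    + apply adj_A2.
    + apply leafV; auto.
    + apply leafV; auto.
Qed.

Lemma BV m t : BG adjV (m, t) <-> t = TB.
Proof.
  split.
  - intros [Hl [[y [Hy Ly]] Ha]]. destruct t; auto; exfalso.
    + apply nbrs in Hy; tagcase; apply leafV in Ly; tagcase; discriminate.
    + apply Ha, AV; auto.
    + apply Hl, leafV; auto.
    + apply Hl, leafV; auto.
    + apply Hl, leafV; auto.
  - intros ->. split; [|split].
    + intros H; apply leafV in H; tagcase; discriminate.
    + exists (m, T3). split; [apply adj_B3|apply leafV; auto].
    + intros H; apply AV in H; discriminate.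
Qed.

Lemma MV m t : MG adjV (m, t) <-> t = TM.
Proof.
  split.
  - intros [Hl Hn]. destruct t; auto; exfalso.
    + apply Hn. exists (m, T1). split; [apply adj_A1|apply leafV; auto].
    + apply Hn. exists (m, T3). split; [apply adj_B3|apply leafV; auto].
    + apply Hl, leafV; auto.
    + apply Hl, leafV; auto.
    + apply Hl, leafV; auto.
  - intros ->. split.
    + intros H; apply leafV in H; tagcase; discriminate.
    + intros [y [Hy Ly]]. apply nbrs in Hy; tagcase; apply leafV in Ly; tagcase; discriminate.
Qed.

Lemma PRV m y : PR adjV (m, TM) y <-> y = (pM m, TM).
Proof.
  split.
  - intros [_ [My [a [b [H1 [H2 [H3 [H4 H5]]]]]]]].
    destruct a as [ma ta]. apply AV in H2. subst ta.
    apply nbrs in H1. tagcase; try discriminate. injection H; intros; subst.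
    destruct b as [mb tb]. apply BV in H4. subst tb.
    apply nbrs in H3. tagcase; try discriminate. injection H0; intros; subst.
    destruct y as [my ty]. apply MV in My. subst ty.
    apply nbrs in H5. tagcase; try discriminate; auto.
  - intros ->. split; [apply MV; auto|]. split; [apply MV; auto|].
    exists (m, TA), (m, TB). split; [apply adj_MA|]. split; [apply AV; auto|].
    split; [apply adj_AB|]. split; [apply BV; auto|]. apply adj_BP.
Qed.

Lemma auto_main f u m' : automorphism adjV f -> f u = (m', TM) -> u = (fst u, TM).
Proof.
  intros Hf E. destruct u as [mu tu]. simpl.
  assert (H : MG adjV (f (mu, tu))) by (rewrite E; apply MV; auto).
  apply (M_iff _ _ f _ Hf) in H. apply MV in H. subst; auto.
Qed.

Lemma auto_parent f m m' : automorphism adjV f -> f (m, TM) = (m', TM) -> f (pM m, TM) = (pM m', TM).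
Proof.
  intros Hf E. assert (H : PR adjV (m, TM) (pM m, TM)) by (apply PRV; auto).
  apply (PR_fwd _ _ f _ _ Hf) in H. rewrite E in H. apply PRV in H. exact H.
Qed.
Lemma adjV_sym x y : adjV x y -> adjV y x.
Proof. unfold adjV, adjF; tauto. Qed.

Definition conn := clos_refl_trans V adjV.

Lemma conn_sym x y : conn x y -> conn y x.
Proof.
  induction 1.
  - apply rt_step, adjV_sym; auto.
  - apply rt_refl.
  - eapply rt_trans; eauto.
Qed.

Lemma conn_pi x : conn x (piV x).
Proof. apply rt_step. left; reflexivity. Qed.

Lemma conn_main x : exists m, conn x (m, TM).
Proof.
  destruct x as [m []].
  - exists m. apply rt_refl.
  - exists m. apply rt_step, adj_AM.
  - exists (pM m). apply rt_step, adj_BP.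
  - exists m. eapply rt_trans; [apply (conn_pi (m, T1))|apply rt_step, adj_AM].
  - exists m. eapply rt_trans; [apply (conn_pi (m, T2))|apply rt_step, adj_AM].
  - exists (pM m). eapply rt_trans; [apply (conn_pi (m, T3))|apply rt_step, adj_BP].
Qed.

Lemma conn_up m : conn (m, TM) (pM m, TM).
Proof.
  eapply rt_trans; [apply (conn_pi (m, TM))|]. simpl.
  eapply rt_trans; [apply (conn_pi (m, TA))|]. simpl. apply (conn_pi (m, TB)).
Qed.

Lemma conn_iter n m : conn (m, TM) (iterp n m, TM).
Proof.
  induction n; simpl; [apply rt_refl|]. eapply rt_trans; [apply IHn|apply conn_up].
Qed.

Lemma conn_V : connected adjV.
Proof.
  intros x y. destruct (conn_main x) as [m Hm], (conn_main y) as [m' Hm'].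
  destruct (M_common m m') as [n [n' E]].
  eapply rt_trans; [apply Hm|]. eapply rt_trans; [apply (conn_iter n)|].
  rewrite E. eapply rt_trans; [apply conn_sym, (conn_iter n')|]. apply conn_sym, Hm'.
Qed.

Lemma tree_V : is_tree adjV.
Proof.
  split; [split|split; [|split]].
  - apply adjV_sym.
  - intros x [H|H]; pose proof (rhoV_pi x) as R; rewrite <- H in R; lia.
  - constructor. exact (base0, TM).
  - apply conn_V.
  - exact (forest_no_cycle V piV rhoV rhoV_pi).
Qed.

Definition nbl (x : V) : list V :=
  piV x :: (let (m, t) := x in
  match t with
  | TM => [(cM m true, TB); (cM m false, TB)]
  | TA => [(m, TM); (m, T1); (m, T2)]
  | TB => [(m, TA); (m, T3)]
  | _ => []
  end).

Lemma lf_V : locally_finite adjV.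
Proof.
  intros [m t]. exists (nbl (m, t)). intros w Hw.
  pose proof Hw as Hw0. destruct Hw0 as [E|E]; [left; auto|]. right.
  apply nbrs in Hw. destruct t; tagcase; simpl; try discriminate; auto 6.
  match goal with |- context [cM (pM ?x) true] => destruct (pM_inv x (pM x) eq_refl) as [E1|E1]; rewrite <- E1; auto end.
Qed.

Lemma lift_auto f : Mauto f -> automorphism adjV (fun x => (f (fst x), snd x)).
Proof.
  intros [[g [H1 H2]] Hc].
  assert (Hpi : forall x : V, piV (f (fst x), snd x) = (f (fst (piV x)), snd (piV x))).
  { intros [m []]; simpl; rewrite ?Hc; reflexivity. }
  assert (Hinj : forall x y : V, (f (fst x), snd x) = (f (fst y), snd y) -> x = y).
  { intros [m t] [m' t'] E. simpl in E. injection E; intros E1 E2.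
    rewrite <- (H1 m), <- (H1 m'), E2, E1. reflexivity. }
  split.
  - exists (fun x => (g (fst x), snd x)). split; intros [m t]; simpl; rewrite ?H1, ?H2; reflexivity.
  - intros x y. unfold adjV, adjF. rewrite !Hpi. split.
    + intros [->| ->]; auto.
    + intros [E|E]; apply Hinj in E; auto.
Qed.

Lemma qt_V : quasi_transitive adjV.
Proof.
  exists (map (fun t => (base0, t)) [TM; TA; TB; T1; T2; T3]).
  intros [m t]. destruct (M_trans m) as [f [Hf E]].
  exists (base0, t). split.
  - destruct t; simpl; tauto.
  - exists (fun x => (f (fst x), snd x)). split; [apply lift_auto; auto|]. simpl. rewrite E. reflexivity.
Qed.
Lemma no_periodic (C : Type) (c : V -> V -> C) :
  proper_edge_coloring adjV c -> ~ periodic adjV c.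
Proof.
  intros Hp [s Hs].
  set (O := fun m m' => exists f, color_preserving adjV c f /\ f (m, TM) = (m', TM)).
  assert (O_refl : forall m, O m m) by (intros m; exists (fun x => x); split; [apply cp_id|reflexivity]).
  assert (O_sym : forall m m', O m m' -> O m' m).
  { intros m m' [f [Hf E]]. destruct (cp_inv _ _ _ _ _ Hf) as [g [Hg [H1 H2]]].
    exists g. split; auto. rewrite <- E, H1. reflexivity. }
  assert (O_trans : forall m1 m2 m3, O m1 m2 -> O m2 m3 -> O m1 m3).
  { intros m1 m2 m3 [f [Hf E]] [g [Hg E']]. exists (fun x => g (f x)). split.
    - apply cp_comp; auto.
    - rewrite E, E'. reflexivity. }
  assert (Hcover : forall m', exists m, In m (map fst s) /\ O m m').
  { intros m'. destruct (Hs (m', TM)) as [u [Hu [f [Hf E]]]].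
    pose proof (auto_main f u m' (proj1 Hf) E) as Eu.
    exists (fst u). split; [apply in_map; auto|]. exists f. split; auto. rewrite <- Eu. exact E. }
  assert (Hcount : forall sM, (forall m', exists m, In m sM /\ O m m') ->
            ~ (exists l1 a l2 b, sM = l1 ++ a :: l2 /\ In b (l1 ++ l2) /\ O b a) -> False).
  { intros sM Hcov HOD.
    assert (ODp : forall u u', In u sM -> In u' sM -> O u u' -> u = u').
    { intros u u' Hu Hu' Ho. apply NNPP. intros Hne.
      destruct (in_split u' sM Hu') as [l1 [l2 E]]. apply HOD. exists l1, u', l2, u.
      split; auto. split; auto. rewrite E in Hu. apply in_app_iff in Hu. apply in_app_iff.
      simpl in Hu. destruct Hu as [Hu|[Hu|Hu]]; auto. congruence. }
    assert (Hnd : NoDup sM).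
    { apply NoDup_of_splits. intros l1 a l2 E Hin. apply HOD. exists l1, a, l2, a. auto. }
    assert (Hrep : exists rep : M -> M, forall m', In (rep m') sM /\ O (rep m') m').
    { exists (fun m' => proj1_sig (constructive_indefinite_description _ (Hcov m'))).
      intros m'. exact (proj2_sig (constructive_indefinite_description _ (Hcov m'))). }
    destruct Hrep as [rep Hrep].
    set (L := map (fun ub => rep (cM (fst ub) (snd ub))) (list_prod sM [true; false])).
    assert (HL1 : NoDup L).
    { apply NoDup_map_inj.
      - apply NoDup_prod; auto. constructor; [simpl; intuition discriminate|].
        constructor; [simpl; tauto|constructor].
      - intros [u b] [u' b'] Hi Hi' E. simpl in E.
        apply in_prod_iff in Hi as [Hu _]. apply in_prod_iff in Hi' as [Hu' _].
        destruct (Hrep (cM u b)) as [_ O1]. destruct (Hrep (cM u' b')) as [_ O2].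
        rewrite E in O1.
        destruct (O_trans _ _ _ (O_sym _ _ O1) O2) as [f [Hf Ef]].
        pose proof (auto_parent f _ _ (proj1 Hf) Ef) as Ep. rewrite !pM_cM in Ep.
        assert (Ou : O u u') by (exists f; auto).
        pose proof (ODp u u' Hu Hu' Ou) as Euu. subst u'.
        pose proof (cp_free V adjV C c f (u, TM) conn_V Hp Hf Ep (cM u b, TM)) as Ff.
        rewrite Ef in Ff. apply (f_equal fst) in Ff. simpl in Ff. apply cM_inj in Ff. subst. reflexivity. }
    assert (HL2 : incl L sM).
    { intros x Hx. unfold L in Hx. apply in_map_iff in Hx as [ub [<- _]]. apply Hrep. }
    pose proof (NoDup_incl_length HL1 HL2) as Hle.
    unfold L in Hle. rewrite length_map, length_prod in Hle. simpl in Hle.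
    destruct sM as [|a sM]; [|simpl in Hle; lia].
    destruct (Hcov base0) as [m [[] _]]. }
  assert (Hkey : forall n sM, length sM <= n -> (forall m', exists m, In m sM /\ O m m') -> False).
  { induction n as [|n IH]; intros sM Hlen Hcov.
    - destruct sM; [|simpl in Hlen; lia]. destruct (Hcov base0) as [m [[] _]].
    - destruct (classic (exists l1 a l2 b, sM = l1 ++ a :: l2 /\ In b (l1 ++ l2) /\ O b a))
        as [[l1 [a [l2 [b [E [Hb Oba]]]]]] | HOD]; [|exact (Hcount sM Hcov HOD)].
      apply (IH (l1 ++ l2)).
      + subst sM. rewrite length_app in *. simpl in Hlen. lia.
      + intros m'. destruct (Hcov m') as [m [Hm Om]]. subst sM.
        apply in_app_iff in Hm. simpl in Hm. destruct Hm as [Hm|[Hm|Hm]].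
        * exists m. split; auto. apply in_app_iff; auto.
        * subst m. exists b. split; auto. eapply O_trans; eauto.
        * exists m. split; auto. apply in_app_iff; auto. }
  exact (Hkey _ (map fst s) (le_n _) Hcover).
Qed.

Theorem mainTheorem18 :
  exists (V : Type) (adj : V -> V -> Prop),
    is_tree adj /\ locally_finite adj /\ quasi_transitive adj /\
    forall (C : Type) (c : V -> V -> C),
      proper_edge_coloring adj c -> ~ periodic adj c.
Proof.
  exists V, adjV. split; [apply tree_V|]. split; [apply lf_V|]. split; [apply qt_V|].
  apply no_periodic.
Qed.
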